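(* Let $f:D^n\to\mathbb{R}^d$ have finite global sensitivity $GS_f>0$ and suppose some $y\in D^n$ has $LS_f(y)=GS_f$. For $x\in D^n$ let $gd(x)=\min_{y:\,LS_f(y)=GS_f}d(y,x)$. Let $\beta>0$ satisfy $$\beta\le\min_{x:\,LS_f(x)\neq GS_f}\frac{1}{gd(x)}\ln\Big(\frac{GS_f}{LS_f(x)}\Big)$$ (with the convention $\ln(GS_f/0)=+\infty$). Then for all $x\in D^n$, $S^*_{f,\beta}(x)=GS_f\cdot e^{-\beta\cdot gd(x)}$.
   Context: $D^n$ denotes the set of datasets consisting of $n$ elements; Hamming distance $d(x,y)=|\{i:x_i\neq y_i\}|$. Global sensitivity: $GS_f=\max_{x,y:d(x,y)=1}\|f(x)-f(y)\|_1$. Local sensitivity: $LS_f(x)=\max_{y:d(x,y)=1}\|f(x)-f(y)\|_1$ (so $LS_f(x)\le GS_f$). For $\beta>0$, the $\beta$-smooth sensitivity of $f$ at $x$ is $S^*_{f,\beta}(x)=\max_{y\in D^n}\big(LS_f(y)\,e^{-\beta\, d(y,x)}\big)$. *)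

(* Defs.v *)
From HB Require Import structures.
From mathcomp Require Import all_boot all_order all_algebra.
From mathcomp Require Import all_classical all_reals all_analysis.
Set Implicit Arguments. Unset Strict Implicit. Unset Printing Implicit Defensive.
Import Order.TTheory GRing.Theory Num.Theory.
Local Open Scope classical_set_scope.
Local Open Scope ring_scope.

Section DP.
Variables (R : realType) (D : eqType) (n d : nat).

Definition hamming (x y : n.-tuple D) : nat :=
  #|[pred i : 'I_n | tnth x i != tnth y i]|.

Definition l1norm (v : 'rV[R]_d) : R := \sum_(i < d) `|v ord0 i|.

Variable f : n.-tuple D -> 'rV[R]_d.

Definition GS_set : set R :=
  [set r | exists x y, hamming x y = 1%N /\ r = l1norm (f x - f y)].
Definition GS : R := sup GS_set.

Definition LS (x : n.-tuple D) : R :=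
  sup [set r | exists y, hamming x y = 1%N /\ r = l1norm (f x - f y)].

Definition smooth_sens (beta : R) (x : n.-tuple D) : R :=
  sup [set r | exists y, r = LS y * expR (- beta * (hamming y x)%:R)].

Definition gd_pred (x : n.-tuple D) : pred nat :=
  fun k => `[< exists y, LS y = GS /\ hamming y x = k >].

Definition gd (x : n.-tuple D) : nat :=
  match pselect (exists k, gd_pred x k) with
  | left h => ex_minn h
  | right _ => 0%N
  end.

End DP.

(* Main.v *)
Require Import Defs.
From HB Require Import structures.
From mathcomp Require Import all_boot all_order all_algebra.
From mathcomp Require Import all_classical all_reals all_analysis.
Import Order.TTheory GRing.Theory Num.Theory.
Local Open Scope classical_set_scope.
Local Open Scope ring_scope.

Lemma hamming_tri (D : eqType) (n : nat) (x y z : n.-tuple D) :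
  (hamming z x <= hamming z y + hamming y x)%N.
Proof.
rewrite /hamming -cardUI; apply: leq_trans (leq_addr _ _).
apply: subset_leq_card. apply/fintype.subsetP => i; rewrite !inE.
by case: (tnth z i =P tnth y i) => [->|] //=.
Qed.

Section S.
Variables (R : realType) (D : eqType) (n d : nat) (f : n.-tuple D -> 'rV[R]_d).

Lemma LS_bounds (hub : has_ubound (GS_set f)) (hGS : 0 < GS f) y :
  0 <= LS f y <= GS f.
Proof.
rewrite /LS.
set E := [set r | exists y0, hamming y y0 = 1%N /\ r = l1norm (f y - f y0)].
have sub : E `<=` GS_set f by move=> r [y0 [h ->]]; exists y, y0.
have [->|/set0P [r Er]] := eqVneq E set0; first by rewrite sup0 lexx ltW.
have hE : E !=set0 by exists r.
have ubE : has_ubound E by case: hub => M hM; exists M => s /sub/hM.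
apply/andP; split.
  apply: le_trans (ub_le_sup ubE Er).
  by case: Er => y0 [_ ->]; rewrite /l1norm sumr_ge0.
apply: ge_sup => // s /sub Gs; exact: ub_le_sup hub s Gs.
Qed.

Lemma gd_spec (hex : exists y, LS f y = GS f) x :
  (exists z, LS f z = GS f /\ hamming z x = gd f x) /\
  (forall z, LS f z = GS f -> (gd f x <= hamming z x)%N).
Proof.
rewrite /gd; case: pselect => [h|h]; last first.
  exfalso; apply: h; case: hex => y hy; exists (hamming y x).
  by apply/asboolP; exists y.
case: ex_minnP => m Pm mmin; split.
  by move/asboolP: Pm.
by move=> z hz; apply: mmin; apply/asboolP; exists z.
Qed.
End S.
Arguments gd_spec {R D n d f}.
Arguments LS_bounds {R D n d f}.

Theorem theorem4 (R : realType) (D : eqType) (n d : nat)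
  (f : n.-tuple D -> 'rV[R]_d) (beta : R) :
  has_ubound (GS_set f) ->
  0 < GS f ->
  (exists y, LS f y = GS f) ->
  0 < beta ->
  (forall x, LS f x != GS f -> 0 < LS f x ->
     beta <= ((gd f x)%:R)^-1 * ln (GS f / LS f x)) ->
  forall x, smooth_sens f beta x = GS f * expR (- beta * (gd f x)%:R).
Proof.
move=> hub hGS hex hb hbeta x.
have [[z [Lz Hz]] _] := gd_spec hex x.
have key : forall y, LS f y * expR (- beta * (hamming y x)%:R) <=
                     GS f * expR (- beta * (gd f x)%:R).
  move=> y.
  have [[w [Lw Hw]] _] := gd_spec hex y.
  have [_ gmin] := gd_spec hex x.
  have tri : (gd f x <= gd f y + hamming y x)%N.
    by apply: leq_trans (gmin w Lw) _; rewrite -Hw hamming_tri.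
  have h1 : GS f * expR (- beta * (gd f y)%:R) * expR (- beta * (hamming y x)%:R)
            <= GS f * expR (- beta * (gd f x)%:R).
    rewrite -mulrA -expRD ler_pM2l // ler_expR -mulrDr -natrD.
    by rewrite !mulNr lerN2 ler_pM2l // ler_nat.
  apply: le_trans h1; rewrite ler_wpM2r ?expR_ge0 //.
  have /andP[L0 LG] := LS_bounds hub hGS y.
  have [Le|Lne] := eqVneq (LS f y) (GS f).
    have [_ gy] := gd_spec hex y.
    have : (gd f y <= hamming y y)%N by apply: gy.
    rewrite Le.
    have -> : hamming y y = 0%N.
      by rewrite /hamming; apply: eq_card0 => i; rewrite !inE eqxx.
    by rewrite leqn0 => /eqP ->; rewrite mulr0 expR0 mulr1.
  have [L0'|Lpos] := eqVneq (LS f y) 0.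
    by rewrite L0' mulr_ge0 ?expR_ge0 // ltW.
  have Lp : 0 < LS f y by rewrite lt_neqAle eq_sym Lpos L0.
  have hb' := hbeta y Lne Lp.
  have [g0|gpos] := eqVneq (gd f y) 0%N.
    by move: hb'; rewrite g0 invr0 mul0r => /(lt_le_trans hb); rewrite ltxx.
  have gp : (0 : R) < (gd f y)%:R by rewrite ltr0n lt0n.
  have hq : 0 < GS f / LS f y by rewrite divr_gt0.
  have h2 : beta * (gd f y)%:R <= ln (GS f / LS f y).
    by rewrite -ler_pdivlMr // mulrC.
  have h3 : expR (beta * (gd f y)%:R) <= GS f / LS f y.
    by move: h2; rewrite -ler_expR lnK // posrE.
  rewrite mulNr expRN ler_pdivlMr ?expR_gt0 // mulrC.
  by rewrite -ler_pdivlMr.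
apply/le_anti/andP; split.
  apply: ge_sup; first by exists (LS f z * expR (- beta * (hamming z x)%:R)), z.
  by move=> r [y ->]; exact: key.
rewrite -Lz -Hz; apply: ub_le_sup; last by exists z.
exists (GS f * expR (- beta * (gd f x)%:R)) => r [y ->]; exact: key.
Qed.
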